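(* For every positively oriented $J$-basis $E$ of $\mathbb{R}^{2n,2n-1}$, the closed crooked halfspace $\overline{\mathcal{H}}_E$ is the topological closure of the open crooked halfspace $\mathcal{H}_E$.
   Context: $\mathbb{R}^{2n,2n-1}$ is $\mathbb{R}^{4n-1}$ with form $v^TJw$, $J$ antidiagonal with $J_{i,4n-i}=(-1)^i$; a $J$-basis is one in which the Gram matrix is $J$. For a nonzero vector $v$ with coordinates $(v_1,\dots,v_{4n-1})$ in the basis $E$, the upper sign variation $S^+_E(v)$ is the number of sign changes in the coordinate sequence when a sign is assigned to each zero coordinate so as to maximize this number, and the lower sign variation $S^-_E(v)$ is the number of sign changes when signs of zero coordinates are chosen to minimize it (equivalently, the number of sign changes among nonzero coordinates). The open crooked halfspace is $\mathcal{H}_E=\{v: S^+_E(v)\le 2n-1$, and in case of equality the sign of the last coordinate used in computing $S^+_E$ is positive$\}$; the closed crooked halfspace is $\overline{\mathcal{H}}_E=\{v: S^-_E(v)\le 2n-1$, and in case of equality the last nonzero coordinate is positive$\}$. *)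

(* Defs.v *)
From HB Require Import structures.
From mathcomp Require Import all_boot all_order all_algebra.
From mathcomp Require Import all_classical all_reals all_analysis.
Set Implicit Arguments. Unset Strict Implicit. Unset Printing Implicit Defensive.
Import Order.TTheory GRing.Theory Num.Theory.
Local Open Scope ring_scope.

(* Dimension of R^{2n,2n-1}: m = 4n-1; indices are 0-based ('I_m). *)
Definition dimn (n : nat) : nat := (4 * n - 1)%N.

(* J antidiagonal: J_{i,4n-i} = (-1)^i for 1-based i; 0-based i0 = i-1,
   j0 = 4n-i-1, so J i0 j0 = (-1)^(i0+1) when i0 + j0 = 4n-2. *)
Definition Jmx (R : realType) (n : nat) : 'M[R]_(dimn n) :=
  \matrix_(i, j) (if (i + j == dimn n - 1)%N then (-1) ^+ (i.+1) else 0).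

(* E : rows are the basis vectors e_1 .. e_m.  Gram matrix (e_i^T J e_j) = J. *)
Definition is_J_basis (R : realType) (n : nat) (E : 'M[R]_(dimn n)) : Prop :=
  E \in unitmx /\ E *m Jmx R n *m E^T = Jmx R n.

Definition pos_oriented (R : realType) (m : nat) (E : 'M[R]_m) : Prop :=
  0 < \det E.

Definition coords (R : realType) (m : nat) (E : 'M[R]_m) (v : 'rV[R]_m) : 'rV[R]_m :=
  v *m invmx E.

Definition compat (R : realType) (m : nat) (c : 'rV[R]_m) (s : {ffun 'I_m -> bool}) : bool :=
  [forall i, ((0 < c 0 i) ==> s i) && ((c 0 i < 0) ==> ~~ s i)].

Definition changes (m : nat) (s : {ffun 'I_m -> bool}) : nat :=
  #|[set i : 'I_m | [exists j : 'I_m, (val j == i.+1) && (s i != s j)]]|.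

Definition Splus (R : realType) (m : nat) (c : 'rV[R]_m) : nat :=
  \max_(s : {ffun 'I_m -> bool} | compat c s) changes s.

Definition Sminus (R : realType) (m : nat) (c : 'rV[R]_m) : nat :=
  \big[minn/m]_(s : {ffun 'I_m -> bool} | compat c s) changes s.

Definition last_plus_pos (R : realType) (m : nat) (c : 'rV[R]_m) : Prop :=
  exists s : {ffun 'I_m -> bool}, [/\ compat c s, changes s = Splus c &
    forall i : 'I_m, (i.+1 = m)%N -> s i].

Definition last_nonzero_pos (R : realType) (m : nat) (c : 'rV[R]_m) : Prop :=
  exists i : 'I_m, 0 < c 0 i /\ forall j : 'I_m, (i < j)%N -> c 0 j = 0.

Definition open_crooked_halfspace (R : realType) (n : nat) (E : 'M[R]_(dimn n))
  : set 'rV[R]_(dimn n) :=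
  [set v | (Splus (coords E v) <= 2 * n - 1)%N /\
           (Splus (coords E v) = (2 * n - 1)%N -> last_plus_pos (coords E v))].

Definition closed_crooked_halfspace (R : realType) (n : nat) (E : 'M[R]_(dimn n))
  : set 'rV[R]_(dimn n) :=
  [set v | (Sminus (coords E v) <= 2 * n - 1)%N /\
           (Sminus (coords E v) = (2 * n - 1)%N -> last_nonzero_pos (coords E v))].

(* Main.v *)
Require Import Defs.
From HB Require Import structures.
From mathcomp Require Import all_boot all_order all_algebra.
From mathcomp Require Import all_classical all_reals all_analysis.
Set Implicit Arguments. Unset Strict Implicit. Unset Printing Implicit Defensive.
Import Order.TTheory GRing.Theory Num.Theory.
Local Open Scope ring_scope.

Section Comb.
Variables (R : realType) (m : nat).
Implicit Types (c : 'rV[R]_m) (s : {ffun 'I_m -> bool}).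

Lemma changes_le s : (changes s <= m)%N.
Proof. by rewrite /changes -[X in (_ <= X)%N]card_ord max_card. Qed.

Definition sgf c : {ffun 'I_m -> bool} := [ffun i => 0 < c 0 i].

Lemma compat_sgf c : compat c (sgf c).
Proof.
apply/forallP => i; rewrite ffunE; apply/andP; split; apply/implyP => //.
by move=> h; rewrite -leNgt ltW.
Qed.

Lemma Sminus_le c s : compat c s -> (Sminus c <= changes s)%N.
Proof. move=> h; rewrite /Sminus -minEnat; exact: (bigmin_le_cond m (@changes m) h). Qed.

Lemma Sminus_ex c : exists2 s, compat c s & Sminus c = changes s.
Proof.
rewrite /Sminus -minEnat (@bigmin_eq_arg _ _ _ m (sgf c) (compat c) (@changes m) (compat_sgf c)); last by move=> *; apply: changes_le.
case: arg_minP; first exact: compat_sgf.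
by move=> s hs _; exists s.
Qed.

Lemma Splus_ge c s : compat c s -> (changes s <= Splus c)%N.
Proof. by move=> h; apply: leq_bigmax_cond. Qed.

Lemma compatP c s : compat c s <-> forall i, (0 < c 0 i -> s i) /\ (c 0 i < 0 -> ~~ s i).
Proof.
split=> [/forallP h i|h]; last by apply/forallP=> i; have [h1 h2] := h i; apply/andP; split; apply/implyP.
by have /andP[/implyP h1 /implyP h2] := h i.
Qed.

Lemma changes_const b : changes ([ffun=> b] : {ffun 'I_m -> bool}) = 0%N.
Proof.
apply/eqP; rewrite cards_eq0; apply/eqP/setP => i; rewrite !inE.
by apply/negbTE/existsP => -[j]; rewrite !ffunE eqxx andbF.
Qed.

Definition trunc s (p : 'I_m) : {ffun 'I_m -> bool} :=
  [ffun i : 'I_m => if (i <= p)%N then s i else s p].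

Lemma trunc_lt s (p l : 'I_m) : (l.+1 = m)%N -> s l != s p -> (changes (trunc s p) < changes s)%N.
Proof.
move=> hl hne; apply: proper_card; apply/properP; split.
  apply/fintype.subsetP => i; rewrite !inE => /existsP[j /andP[/eqP hj]]; rewrite !ffunE.
  case: (leqP i p) => hi; case: (leqP j p) => hj'.
  - by move=> h; apply/existsP; exists j; rewrite hj eqxx h.
  - have ip : val i = val p by apply/eqP; rewrite eqn_leq hi -ltnS -hj.
    by rewrite (_ : i = p) ?eqxx //; apply: val_inj.
  - by exfalso; move: hj'; rewrite hj; move/(ltn_trans hi); rewrite ltnn.
  - by rewrite eqxx.
pose P := fun i : 'I_m => (p <= i)%N && (s i == s p).
have Pp : P p by rewrite /P leqnn eqxx.
case: (arg_maxnP (fun i : 'I_m => val i) Pp) => i /andP[pi /eqP si] imax.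
have il : (i < l)%N.
  rewrite ltn_neqAle -ltnS hl ltn_ord andbT; apply/eqP => e.
  have : i = l by apply: val_inj.
  by move=> E; move: hne; rewrite -E si eqxx.
have i1m : (i.+1 < m)%N by apply: leq_trans (eq_leq hl); rewrite ltnS.
exists i.
  rewrite inE; apply/existsP; exists (Ordinal i1m); rewrite /= eqxx /=.
  rewrite si; apply/negP => /eqP E.
  have := imax (Ordinal i1m); rewrite /P /= (leq_trans pi (leqnSn _)) -E eqxx => /(_ isT).
  by rewrite ltnn.
rewrite inE; apply/negP => /existsP[j /andP[/eqP hj]]; rewrite !ffunE.
rewrite (leqNgt j) hj ltnS pi /=.
case: (leqP i p) => ip; last by rewrite eqxx.
have : val i = val p by apply/eqP; rewrite eqn_leq ip pi.
by move=> E; rewrite (_ : i = p) ?eqxx //; apply: val_inj.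
Qed.

Lemma trunc_compat c s (p : 'I_m) : compat c s -> (forall j : 'I_m, (p < j)%N -> c 0 j = 0) ->
  compat c (trunc s p).
Proof.
move=> /compatP h hz; apply/compatP => i; rewrite ffunE.
case: (leqP i p) => ip; first exact: h.
by rewrite hz // ltxx.
Qed.


Variables (l : 'I_m) (k : nat).
Hypothesis hl : (l.+1 = m)%N.
Hypothesis k0 : (0 < k)%N.

Definition Hc c := (Splus c <= k)%N /\ (Splus c = k -> last_plus_pos c).
Definition Cc c := (Sminus c <= k)%N /\ (Sminus c = k -> last_nonzero_pos c).

Lemma L1 c c' : (forall i, (0 < c 0 i -> 0 < c' 0 i) /\ (c 0 i < 0 -> c' 0 i < 0)) ->
  Hc c' -> Cc c.
Proof.
move=> hsg [hk hlast].
have mono s : compat c' s -> compat c s.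
  move=> /compatP h; apply/compatP => i; have [a b] := hsg i; have [a' b'] := h i.
  by split=> [/a/a'|/b/b'].
have le1 : (Sminus c <= Splus c')%N.
  apply: leq_trans (Sminus_le (mono _ (compat_sgf c'))) _; exact: Splus_ge (compat_sgf c').
split; first exact: leq_trans le1 hk.
move=> eqk.
have spk : Splus c' = k by apply/eqP; rewrite eqn_leq hk -eqk le1.
have [s [cs hs hsl]] := hlast spk.
have cs' := mono _ cs.
have hsm : changes s = Sminus c by rewrite hs spk eqk.
case: (pselect (exists i, c 0 i != 0)) => [[i0 hi0]|hn]; last first.
  have : compat c [ffun=> true].
    apply/compatP => i; split=> h; exfalso; apply: hn; exists i; [exact: lt0r_neq0 | exact: ltr0_neq0].
  move/Sminus_le; rewrite changes_const eqk leqn0 => /eqP k00.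
  by move: k0; rewrite k00.
case: (arg_maxnP (fun i : 'I_m => val i) (P := fun i => c 0 i != 0) hi0) => p hp pmax.
have hz : forall j : 'I_m, (p < j)%N -> c 0 j = 0.
  move=> j pj; apply/eqP; apply/negPn/negP => hj.
  by have := pmax j hj; rewrite /= leqNgt pj.
exists p; split => //.
have [//|cneg] := ltrP 0 (c 0 p).
have cp : c 0 p < 0 by rewrite lt_neqAle hp cneg.
have sp : ~~ s p by have /compatP/(_ p) [_ ->] := cs'.
have sl : s l by apply: hsl.
have : s l != s p by rewrite sl (negbTE sp).
move/trunc_lt => /(_ hl); rewrite hsm.
have := Sminus_le (trunc_compat cs' hz).
by move=> a b; have := leq_ltn_trans a b; rewrite ltnn.
Qed.

Lemma L2 c : Cc c -> exists d : 'rV[R]_m, forall e : R, 0 < e -> Hc (c + e *: d).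
Proof.
move=> [hk hlast].
have [t ct tmin] : exists2 t, compat c t & changes t = Sminus c /\ (Sminus c = k -> t l).
  have [t ct ht] := Sminus_ex c.
  exists t => //; split => // eqk.
  have [p [cp hz]] := hlast eqk.
  have tp : t p by have /compatP/(_ p) [h _] := ct; exact: h.
  apply/negPn/negP => tl.
  have : t l != t p by rewrite tp (negbTE tl).
  move/trunc_lt => /(_ hl); rewrite -ht.
  have := Sminus_le (trunc_compat ct hz).
  by move=> a b; have := leq_ltn_trans a b; rewrite ltnn.
case: tmin => tch tl.
exists (\row_i (if c 0 i == 0 then (if t i then 1 else -1) else 0)) => e e0.
set c' := c + e *: _.
have key : forall i, (t i -> 0 < c' 0 i) /\ (~~ t i -> c' 0 i < 0).
  move=> i; rewrite /c' !mxE.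
  have /compatP/(_ i) [h1 h2] := ct.
  case: eqP => [->|cn]; first by case: (t i); rewrite add0r ?mulr1 ?mulrN1 ?oppr_lt0.
  rewrite mulr0 addr0.
  have [cpos|cneg] := ltrP 0 (c 0 i); first by rewrite (h1 cpos).
  have cn' : c 0 i < 0 by rewrite lt_neqAle cneg andbT; apply/eqP.
  by rewrite (negbTE (h2 cn')).
have ct' : compat c' t.
  apply/compatP => i; have [a b] := key i; split => h.
    by apply/negPn/negP => /b; rewrite ltNge ltW.
  by apply/negP => /a; rewrite ltNge ltW.
have uniq : forall s, compat c' s -> s = t.
  move=> s /compatP cs; apply/ffunP => i; have [a b] := key i; have [a' b'] := cs i.
  by case ti: (t i); [apply: a'; apply: a|apply/negbTE; apply: b'; apply: b; rewrite ti].
have sp : Splus c' = changes t.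
  apply/eqP; rewrite eqn_leq Splus_ge // andbT.
  by apply/bigmax_leqP => s /uniq ->.
rewrite /Hc sp tch; split => // eqk.
exists t; split => //.
move=> i hi; have -> : i = l by apply: val_inj; apply: succn_inj; rewrite hi.
exact: tl.
Qed.

End Comb.
Section Top.
Variables (R : realType) (m : nat).

Lemma ballmxE (v x : 'rV[R^o]_m) e : ball v e x <-> 0 < e /\ forall i, `|v 0 i - x 0 i| < e.
Proof.
split => [[e0 h]|[e0 h]]; split => //.
  by move=> i; have := h 0 i.
by move=> i j; rewrite (ord1 i); exact: h.
Qed.

Lemma T1 (A : 'M[R]_m) (v : 'rV[R^o]_m) (d : R) : 0 < d ->
  exists2 e, 0 < e & forall x, ball v e x -> forall i, `|(x *m A) 0 i - (v *m A) 0 i| < d.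
Proof.
move=> d0; set M := \sum_j \sum_i `|A j i|.
have M0 : 0 <= M by apply: sumr_ge0 => j _; apply: sumr_ge0.
exists (d / (M + 1)); first by rewrite divr_gt0 // ltr_wpDl.
move=> x /ballmxE [e0 hx] i.
have -> : (x *m A) 0 i - (v *m A) 0 i = ((x - v) *m A) 0 i by rewrite mulmxBl !mxE.
rewrite mxE.
apply: (le_lt_trans (ler_norm_sum _ _ _)).
apply: (@le_lt_trans _ _ (\sum_j (d / (M + 1)) * `|A j i|)).
  apply: ler_sum => j _; rewrite normrM ler_wpM2r //.
  by rewrite !mxE distrC ltW.
rewrite -mulr_sumr.
apply: (@le_lt_trans _ _ (d / (M + 1) * M)).
  rewrite ler_wpM2l //; first exact: ltW.
  apply: ler_sum => j _; rewrite (bigD1 i) //= ler_wpDr //; exact: sumr_ge0.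
rewrite mulrAC ltr_pdivrMr ?ltr_wpDl // ltr_pM2l //.
by rewrite ltrDl.
Qed.

Lemma T2 (v w : 'rV[R^o]_m) e : 0 < e -> exists2 t, 0 < t & ball v e (v + t *: w).
Proof.
move=> e0; set N := \sum_j `|w 0 j|.
have N0 : 0 <= N by apply: sumr_ge0.
exists (e / (N + 1)); first by rewrite divr_gt0 // ltr_wpDl.
apply/ballmxE; split => // i.
rewrite !mxE opprD addrA subrr add0r normrN normrM.
rewrite gtr0_norm ?divr_gt0 ?ltr_wpDl //.
apply: (@le_lt_trans _ _ (e / (N + 1) * N)).
  rewrite ler_wpM2l //; first by apply: divr_ge0; [exact: ltW | exact: addr_ge0].
  rewrite /N (bigD1 i) //= ler_wpDr //; exact: sumr_ge0.
by rewrite mulrAC ltr_pdivrMr ?ltr_wpDl // ltr_pM2l // ltrDl.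
Qed.


End Top.
From mathcomp Require Import lra zify.

Theorem lemma5p2 (R : realType) (n : nat) (E : 'M[R]_(dimn n)) :
  (0 < n)%N -> is_J_basis E -> pos_oriented E ->
  closure (open_crooked_halfspace E : set 'rV[R^o]_(dimn n)) = closed_crooked_halfspace E.
Proof.
move=> n0 [Eu _] _.
have m0 : (0 < dimn n)%N by rewrite /dimn; lia.
have hm : ((dimn n).-1 < dimn n)%N by rewrite prednK.
pose l := Ordinal hm.
have hl : (l.+1 = dimn n)%N by rewrite /= prednK.
have k0 : (0 < 2 * n - 1)%N by lia.
rewrite eqEsubset; split.
- move=> v hv.
  set c := coords E v.
  pose F := fun i : 'I_(dimn n) => if c 0 i == 0 then 1 else `|c 0 i|.
  pose del := \big[Order.min/1]_i F i.
  have del0 : 0 < del.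
    apply: lt_bigmin => // i _; rewrite /F; case: eqP => // /eqP h.
    by rewrite normr_gt0.
  have delF i : del <= F i by apply: bigmin_le_cond.
  have [e e0 he] := T1 (invmx E) v del0.
  have [x [hx xB]] := hv _ (nbhsx_ballx v e e0).
  apply: (L1 hl k0 (c' := coords E x)) => //.
  move=> i; have := he x xB i; rewrite -/(coords E x) -/c => hd.
  have hF := delF i; rewrite /F in hF.
  move: hd; rewrite ltr_norml => /andP[h1 h2].
  split => hc.
    by rewrite gt_eqF // gtr0_norm // in hF; lra.
  by rewrite lt_eqF // ltr0_norm // in hF; lra.
- move=> v hv.
  have [d hd] := L2 hl hv.
  move=> B /nbhs_ballP [e e0 hB].
  have [t t0 hb] := T2 v (d *m E) e0.
  exists (v + t *: (d *m E)); split; last exact: hB.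
  have := hd t t0.
  move=> h; rewrite /open_crooked_halfspace /= /coords mulmxDl -scalemxAl mulmxK //; exact: h.
Qed.
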